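(* For all positive integers $s,k$ and every integer $n\geq 3$, the graph $sF_{n+1}\cup kF_n$ (the disjoint union of $s$ copies of $F_{n+1}$ and $k$ copies of $F_n$) is $C_3$-supermagic.
   Context: All graphs are finite and simple. For a graph $H$, a graph $G=(V,E)$ has an $H$-covering if every edge of $G$ belongs to a subgraph of $G$ isomorphic to $H$. For such $G$, an $H$-magic labeling is a bijection $\lambda: V\cup E\to\{1,2,\dots,|V|+|E|\}$ for which there is a constant $c$ such that for every subgraph $H'=(V',E')$ of $G$ isomorphic to $H$, $\sum_{v\in V'}\lambda(v)+\sum_{e\in E'}\lambda(e)=c$. It is $H$-supermagic if moreover $\{\lambda(v):v\in V\}=\{1,\dots,|V|\}$; $G$ is $H$-supermagic if it admits such a labeling. $C_k$ is the cycle of length $k$. $sG$ denotes the disjoint union of $s$ copies of $G$, and $\cup$ denotes disjoint union. For $n\geq 3$, the fan $F_n=K_1+P_n$ has vertices $c,v_1,\dots,v_n$ and edges $cv_i$ ($1\le i\le n$) and $v_iv_{i+1}$ ($1\le i\le n-1$). *)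

(* Defs.v *)
From mathcomp Require Import all_boot.
Set Implicit Arguments. Unset Strict Implicit. Unset Printing Implicit Defensive.

(* A finite simple graph is given by a finType of vertices V and an adjacency
   relation adj : rel V (symmetric and irreflexive for the graphs used here). *)

Section Graphs.
Variables (V : finType) (adj : rel V).

Definition edge_set : {set {set V}} :=
  [set e | [exists x, exists y, adj x y && (e == [set x; y])]].

Definition Edge : finType := {e : {set V} | e \in edge_set}.

(* Subgraphs isomorphic to C_3: three pairwise adjacent vertices, together
   with the three edges joining them (the edges of G contained in T). *)
Definition is_triangle (T : {set V}) : bool :=
  (#|T| == 3) && [forall x in T, forall y in T, (x != y) ==> adj x y].

Definition C3_covering : Prop :=
  forall e : Edge, exists T : {set V}, is_triangle T /\ val e \subset T.

Definition tri_weight (lam : V + Edge -> nat) (T : {set V}) : nat :=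
  \sum_(v in T) lam (inl v) + \sum_(e : Edge | val e \subset T) lam (inr e).

Definition total_labeling (lam : V + Edge -> nat) : Prop :=
  injective lam /\
  (forall x, 1 <= lam x <= #|V| + #|{: Edge}|) /\
  (forall m, 1 <= m <= #|V| + #|{: Edge}| -> exists x, lam x = m).

Definition C3_magic_labeling (lam : V + Edge -> nat) : Prop :=
  total_labeling lam /\
  exists c, forall T : {set V}, is_triangle T -> tri_weight lam T = c.

Definition C3_supermagic_labeling (lam : V + Edge -> nat) : Prop :=
  C3_magic_labeling lam /\
  (forall m, (exists v, lam (inl v) = m) <-> 1 <= m <= #|V|).

Definition C3_supermagic : Prop :=
  C3_covering /\ exists lam, C3_supermagic_labeling lam.

End Graphs.

(* Fan F_m on vertex set 'I_m.+1: index 0 is the centre c, index i >= 1 is v_i.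
   Edges: c v_i (1 <= i <= m) and v_i v_(i+1) (1 <= i <= m-1). *)
Definition fan_adj (m : nat) : rel 'I_m.+1 :=
  fun i j =>
    [|| (i == 0 :> nat) && (j != 0 :> nat),
        (j == 0 :> nat) && (i != 0 :> nat),
        (i != 0 :> nat) && (i.+1 == j :> nat)
      | (j != 0 :> nat) && (j.+1 == i :> nat)].

Definition fan_union_vertex (s k a b : nat) : finType :=
  (('I_s * 'I_a.+1) + ('I_k * 'I_b.+1))%type.

Definition fan_union_adj (s k a b : nat) : rel (fan_union_vertex s k a b) :=
  fun x y =>
    match x, y with
    | inl (p, i), inl (q, j) => (p == q) && fan_adj i j
    | inr (p, i), inr (q, j) => (p == q) && fan_adj i j
    | _, _ => false
    end.

(* Main.v *)
Require Import Defs.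
From mathcomp Require Import all_boot zify.
Set Implicit Arguments. Unset Strict Implicit. Unset Printing Implicit Defensive.

Section Abstract.
Variables (V : finType) (adj : rel V) (f : V -> nat) (g : V -> V -> nat) (W M : nat).
Hypotheses (adjsym : symmetric adj) (adjirr : irreflexive adj)
  (gsym : forall x y, g x y = g y x)
  (finj : injective f) (frange : forall x, 0 < f x <= #|V|)
  (grange : forall x y, adj x y -> #|V| < g x y <= #|V| + M)
  (ginj : forall x y x' y', adj x y -> adj x' y' -> g x y = g x' y' -> [set x; y] = [set x'; y'])
  (gsurj : forall m, #|V| < m <= #|V| + M -> exists x y, adj x y /\ g x y = m)
  (cov : forall x y, adj x y -> exists z, adj x z && adj y z)
  (magic : forall x y z, adj x y -> adj y z -> adj x z -> f x + f y + f z + g x y + g y z + g x z = W).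

Lemma card_bij (T : finType) (h : T -> nat) N : injective h -> (forall x, 0 < h x <= N) ->
  (forall m, 0 < m <= N -> exists x, h x = m) -> #|T| = N.
Proof.
move=> hi hr hs.
have U1 : uniq (map h (enum T)) by rewrite map_inj_uniq ?enum_uniq.
have U2 : uniq (iota 1 N) by apply: iota_uniq.
have E : map h (enum T) =i iota 1 N.
  move=> m; rewrite mem_iota; apply/mapP/idP.
    by case=> x _ ->; have := hr x; lia.
  move=> hm; have [x hx] := hs m ltac:(lia); exists x => //; by rewrite mem_enum.
by rewrite cardE -(size_map h) (perm_size (uniq_perm U1 U2 E)) size_iota.
Qed.

Lemma inj_surj (T : finType) (h : T -> nat) : injective h -> (forall x, 0 < h x <= #|T|) ->
  forall m, 0 < m <= #|T| -> exists x, h x = m.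
Proof.
move=> hi hr m hm.
have U1 : uniq (map h (enum T)) by rewrite map_inj_uniq ?enum_uniq.
have S : {subset map h (enum T) <= iota 1 #|T|}.
  by move=> u /mapP [x _ ->]; rewrite mem_iota; have := hr x; lia.
have [_ E] := uniq_min_size U1 S ltac:(by rewrite size_map size_iota cardE).
have : m \in iota 1 #|T| by rewrite mem_iota; lia.
by rewrite -E => /mapP [x _ ->]; exists x.
Qed.

Lemma edgeP (e : Edge adj) : exists x y, adj x y /\ val e = [set x; y].
Proof.
have := valP e; rewrite inE => /existsP [x /existsP [y /andP [h /eqP ->]]].
by exists x, y.
Qed.

Lemma mkE_proof x y : adj x y -> [set x; y] \in edge_set adj.
Proof. by move=> h; rewrite inE; apply/existsP; exists x; apply/existsP; exists y; rewrite h eqxx. Qed.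

Definition mkE x y (h : adj x y) : Edge adj := exist _ [set x; y] (mkE_proof h).

Definition lamE (e : Edge adj) : nat :=
  if [pick xy : V * V | adj xy.1 xy.2 && (val e == [set xy.1; xy.2])] is Some xy
  then g xy.1 xy.2 else 0.

Lemma set2_eq (x y x' y' : V) : [set x; y] = [set x'; y'] ->
  (x = x' /\ y = y') \/ (x = y' /\ y = x').
Proof.
move=> E.
have hx : x \in [set x'; y'] by rewrite -E set21.
have hy : y \in [set x'; y'] by rewrite -E set22.
have hx' : x' \in [set x; y] by rewrite E set21.
have hy' : y' \in [set x; y] by rewrite E set22.
move: hx hy hx' hy' => /set2P [] -> /set2P [] -> /set2P [] ? /set2P [] ?; subst; auto.
Qed.

Lemma lamE_val e x y : adj x y -> val e = [set x; y] -> lamE e = g x y.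
Proof.
move=> h E; rewrite /lamE; case: pickP => [[u v] /= /andP [huv /eqP E2] | H].
  by rewrite E in E2; case: (set2_eq E2) => [[-> ->]|[-> ->]].
by have := H (x, y); rewrite /= h E eqxx.
Qed.

Definition lam (z : V + Edge adj) : nat :=
  match z with inl v => f v | inr e => lamE e end.

Lemma lamE_range e : #|V| < lamE e <= #|V| + M.
Proof. by have [x [y [h E]]] := edgeP e; rewrite (lamE_val h E); apply: grange. Qed.

Lemma lamE_inj : injective lamE.
Proof.
move=> e e'; have [x [y [h E]]] := edgeP e; have [x' [y' [h' E']]] := edgeP e'.
rewrite (lamE_val h E) (lamE_val h' E') => /(ginj h h') Es.
by apply: val_inj; rewrite E E'.
Qed.

Lemma cardE_M : #|{: Edge adj}| = M.
Proof.
apply: (@card_bij _ (fun e => lamE e - #|V|)).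
- move=> e e' hE; simpl in hE; apply: lamE_inj; have := lamE_range e; have := lamE_range e'.
  move: hE; set a := lamE e; set b := lamE e'; set c := #|V|; lia.
- move=> e; have := lamE_range e; set c := #|V|; lia.
move=> m hm; have [x [y [h hg]]] := gsurj (m := m + #|V|) ltac:(lia).
by exists (mkE h); rewrite (@lamE_val (mkE h) x y h (erefl _)) hg; lia.
Qed.

Lemma lam_inj : injective lam.
Proof.
case=> [v|e] [v'|e'] //=.
- by move/finj ->.
- by have := frange v; have := lamE_range e'; lia.
- by have := frange v'; have := lamE_range e; lia.
- by move/lamE_inj ->.
Qed.

Lemma triangle_form T : is_triangle adj T -> exists x y z,
  [/\ adj x y, adj y z, adj x z & T = x |: [set y; z]].
Proof.
case/andP=> /eqP c3 /forall_inP H.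
have : T != set0 by rewrite -card_gt0 c3.
case/set0Pn=> x xT.
have : #|T :\ x| == 2 by have := cardsD1 x T; rewrite xT c3; lia.
case/cards2P=> y [z [yz E]].
have yTx : y \in T :\ x by rewrite E set21.
have zTx : z \in T :\ x by rewrite E set22.
move: (yTx) (zTx); rewrite !inE => /andP [xy yT] /andP [xz zT].
rewrite eq_sym in xy; rewrite eq_sym in xz.
exists x, y, z; split.
- by move/forall_inP: (H x xT) => /(_ y yT); rewrite xy.
- by move/forall_inP: (H y yT) => /(_ z zT); rewrite yz.
- by move/forall_inP: (H x xT) => /(_ z zT); rewrite xz.
by rewrite -E setD1K.
Qed.


Lemma neq_of_adj x y : adj x y -> x != y.
Proof. by apply: contraTneq => ->; rewrite adjirr. Qed.

Lemma tri_of x y z : adj x y -> adj y z -> adj x z -> is_triangle adj (x |: [set y; z]).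
Proof.
move=> hxy hyz hxz.
have xy := neq_of_adj hxy; have yz := neq_of_adj hyz; have xz := neq_of_adj hxz.
rewrite /is_triangle cardsU1 cards2 !inE negb_or xy xz yz /=.
apply/forall_inP => u; rewrite !inE => hu; apply/forall_inP => w; rewrite !inE => hw.
apply/implyP => uw.
move: hu hw uw => /orP [/eqP->|/orP [/eqP->|/eqP->]] /orP [/eqP->|/orP [/eqP->|/eqP->]];
  rewrite ?eqxx //= => _; by rewrite // adjsym.
Qed.

Lemma tri_weight_eq x y z : adj x y -> adj y z -> adj x z ->
  tri_weight lam (x |: [set y; z]) = f x + f y + f z + g x y + g y z + g x z.
Proof.
move=> hxy hyz hxz.
have xy := neq_of_adj hxy; have yz := neq_of_adj hyz; have xz := neq_of_adj hxz.
rewrite /tri_weight big_setU1 /=; last by rewrite !inE negb_or xy xz.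
rewrite big_setU1 /=; last by rewrite !inE.
rewrite big_set1 /=.
pose exy := mkE hxy; pose eyz := mkE hyz; pose exz := mkE hxz.
have nxy_yz : exy != eyz.
  apply/eqP => /(congr1 val) /= E; have : x \in [set y; z] by rewrite -E set21.
  by rewrite !inE (negbTE xy) (negbTE xz).
have nxy_xz : exy != exz.
  apply/eqP => /(congr1 val) /= E; have : y \in [set x; z] by rewrite -E set22.
  by rewrite !inE eq_sym (negbTE xy) (negbTE yz).
have nyz_xz : eyz != exz.
  apply/eqP => /(congr1 val) /= E; have : y \in [set x; z] by rewrite -E set21.
  by rewrite !inE eq_sym (negbTE xy) (negbTE yz).
rewrite (eq_bigl (fun e => e \in exy |: [set eyz; exz])); last first.
  move=> e; rewrite !inE; apply/idP/idP.
    have [u [v [h E]]] := edgeP e; rewrite E => /subsetP S.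
    have uT := S u (set21 _ _); have vT := S v (set22 _ _).
    have uv := neq_of_adj h.
    have valE : forall e', e == e' = (val e == val e') by [].
    rewrite !valE E /=.
    move: uT vT uv; rewrite !inE => /orP [/eqP->|/orP [/eqP->|/eqP->]] /orP [/eqP->|/orP [/eqP->|/eqP->]];
      rewrite ?eqxx //= => _; rewrite ?eqxx ?orbT //; rewrite setUC eqxx ?orbT //.
  move=> /orP [/eqP->|/orP [/eqP->|/eqP->]] /=; apply/subsetP => w; rewrite !inE;
    by case/orP=> ->; rewrite ?orbT.
rewrite big_setU1 /=; last by rewrite !inE negb_or nxy_yz nxy_xz.
rewrite big_setU1 /=; last by rewrite !inE.
rewrite big_set1 /=.
rewrite (@lamE_val exy x y) // (@lamE_val eyz y z) // (@lamE_val exz x z) //.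
lia.
Qed.

Theorem abstract_main : C3_supermagic adj.
Proof.
split.
  move=> e; have [x [y [h E]]] := edgeP e; have [z /andP [hxz hyz]] := cov h.
  exists (x |: [set y; z]); split.
    by apply: tri_of => //; rewrite adjsym.
  by rewrite E; apply/subsetP => w; rewrite !inE; case/orP => ->; rewrite ?orbT.
exists lam; split; [split|].
- split; first exact: lam_inj.
  split.
    case=> [v|e] /=; rewrite cardE_M.
      by have := frange v; set c := #|V|; lia.
    by have := lamE_range e; set c := #|V|; lia.
  move=> m; rewrite cardE_M => hm.
  case: (leqP m #|V|) => hmV.
    have [v hv] := inj_surj finj frange (m := m) ltac:(set c := #|V|; lia).
    by exists (inl v).
  have [x [y [h hg]]] := gsurj (m := m) ltac:(set c := #|V|; lia).
  by exists (inr (mkE h)); rewrite /= (@lamE_val (mkE h) x y h (erefl _)).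
- exists W => T /triangle_form [x [y [z [hxy hyz hxz ->]]]].
  by rewrite tri_weight_eq // magic.
move=> m; split.
  by case=> v <- /=; apply: frange.
by move=> hm; have [v hv] := inj_surj finj frange hm; exists v.
Qed.

End Abstract.

Section Concrete.
Variables (s k a b : nat).
Hypotheses (ha : 2 <= a) (hb : 2 <= b).

Local Notation V := (fan_union_vertex s k a b).
Local Notation adj := (@fan_union_adj s k a b).

Definition comp (x : V) : nat := match x with inl (p, _) => val p | inr (q, _) => s + val q end.
Definition idx (x : V) : nat := match x with inl (_, i) => val i | inr (_, i) => val i end.
Definition len (x : V) : nat := match x with inl _ => a | inr _ => b end.
Definition off (x : V) : nat := match x with inl (p, _) => val p * a | inr (q, _) => s * a + val q * b end.
Definition tix (x : V) : nat := off x + (idx x).-1.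
Definition P := s * a + k * b.
Definition Q := s + k.
Definition X := (P.+1)./2 + 1.
Definition hh (t : nat) := if odd t then X + t./2 else t./2 + 1.
Definition fl (x : V) : nat := if idx x == 0 then P + 1 + comp x else hh (tix x).
Definition gl (x y : V) : nat :=
  if idx x == 0 then (if idx y == 0 then 0 else 3 * P - tix y)
  else if idx y == 0 then 3 * P - tix x
  else P + Q + 1 + minn (tix x) (tix y) - minn (comp x) (comp y).

Definition frel (i j : nat) : bool := [|| (i == 0) && (j != 0), (j == 0) && (i != 0), (i != 0) && (i.+1 == j) | (j != 0) && (j.+1 == i)].

Lemma adjE x y : adj x y = (comp x == comp y) && frel (idx x) (idx y).
Proof.
case: x => [[p i]|[p i]]; case: y => [[q j]|[q j]] //=.
- have := ltn_ord p => hp; rewrite (_ : (_ == _) = false) //; apply/eqP; lia.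
- have := ltn_ord q => hp; rewrite (_ : (_ == _) = false) //; apply/eqP; lia.
- by rewrite eqn_add2l.
Qed.

Lemma idx_le x : idx x <= len x.
Proof. by case: x => [[p i]|[p i]] /=; rewrite -ltnS. Qed.

Lemma comp_lt x : comp x < Q.
Proof. rewrite /Q; case: x => [[p i]|[p i]] /=; have := ltn_ord p; lia. Qed.

Lemma comp_eq x y : comp x = comp y -> off x = off y /\ len x = len y.
Proof.
case: x => [[p i]|[p i]]; case: y => [[q j]|[q j]] /=.
- by move=> ->.
- by have := ltn_ord p; lia.
- by have := ltn_ord q; lia.
- by move=> E; have /ord_inj -> : nat_of_ord p = nat_of_ord q by lia.
Qed.

Lemma vert_eq x y : comp x = comp y -> idx x = idx y -> x = y.
Proof.
case: x => [[p i]|[p i]]; case: y => [[q j]|[q j]] /=.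
- by move=> /val_inj -> /val_inj ->.
- by have := ltn_ord p; lia.
- by have := ltn_ord q; lia.
- by move=> E /val_inj ->; have /ord_inj -> : nat_of_ord p = nat_of_ord q by lia.
Qed.

Lemma tix_bounds x : idx x != 0 -> comp x <= tix x /\ tix x < P.
Proof.
rewrite /tix /P; case: x => [[p i]|[p i]] /=.
  have := ltn_ord p; have := ltn_ord i; move: (nat_of_ord p) (nat_of_ord i) => pp ii h1 h2 h3.
  have : pp.+1 * a <= s * a by rewrite leq_mul2r h2 orbT.
  have : pp <= pp * a by rewrite leq_pmulr //; lia.
  rewrite mulSn; lia.
have := ltn_ord p; have := ltn_ord i; move: (nat_of_ord p) (nat_of_ord i) => pp ii h1 h2 h3.
have : pp.+1 * b <= k * b by rewrite leq_mul2r h2 orbT.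
have : pp <= pp * b by rewrite leq_pmulr //; lia.
have : s <= s * a by rewrite leq_pmulr //; lia.
rewrite mulSn; lia.
Qed.

Lemma mixed (x y u v m : nat) : u < m -> v < m -> x * m + u = y * m + v -> x = y /\ u = v.
Proof.
move=> hu hv E.
have m0 : 0 < m by lia.
have E1 := congr1 (divn^~ m) E; rewrite /= !divnMDl // !divn_small // !addn0 in E1.
by split => //; move: E; rewrite E1; lia.
Qed.

Lemma tix_inj x y : idx x != 0 -> idx y != 0 -> tix x = tix y -> x = y.
Proof.
move=> hx hy; rewrite /tix.
case: x hx => [[p i]|[p i]]; case: y hy => [[q j]|[q j]] /= hx hy E.
- have := ltn_ord i; have := ltn_ord j => hj hi.
  have [/val_inj ep ei] := @mixed p q i.-1 j.-1 a ltac:(lia) ltac:(lia) E.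
  by rewrite ep; congr (inl (_, _)); apply: val_inj => /=; lia.
- have := ltn_ord p; have := ltn_ord i; move: (nat_of_ord p) (nat_of_ord i) E => pp ii E h2 h3.
  have : pp.+1 * a <= s * a by rewrite leq_mul2r h3 orbT.
  rewrite mulSn; lia.
- have := ltn_ord q; have := ltn_ord j; move: (nat_of_ord q) (nat_of_ord j) E => pp ii E h2 h3.
  have : pp.+1 * a <= s * a by rewrite leq_mul2r h3 orbT.
  rewrite mulSn; lia.
- have := ltn_ord i; have := ltn_ord j => hj hi.
  have E' : p * b + i.-1 = q * b + j.-1 by lia.
  have [/val_inj ep ei] := @mixed p q i.-1 j.-1 b ltac:(lia) ltac:(lia) E'.
  by rewrite ep; congr (inr (_, _)); apply: val_inj => /=; lia.
Qed.


Lemma cardV : #|{: V}| = P + Q.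
Proof. rewrite card_sum !card_prod !card_ord /P /Q; nia. Qed.

Lemma QP : Q + Q <= P.
Proof. rewrite /P /Q; nia. Qed.

Lemma code_lt x : idx x != 0 -> idx x < len x -> tix x + Q < P + comp x.
Proof.
rewrite /tix /P /Q; case: x => [[p i]|[p i]] /=; have := ltn_ord p; have := ltn_ord i;
  move: (nat_of_ord p) (nat_of_ord i) => pp ii; intros; nia.
Qed.

Lemma code_inj x y : idx x != 0 -> idx x < len x -> idx y != 0 -> idx y < len y ->
  tix x + comp y = tix y + comp x -> x = y.
Proof.
rewrite /tix.
case: x => [[p i]|[p i]]; case: y => [[q j]|[q j]] /=; have := ltn_ord p; have := ltn_ord q => hq hp hx hx' hy hy' E.
- have E' : p * a.-1 + i.-1 = q * a.-1 + j.-1 by nia.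
  have [/ord_inj ep ei] := @mixed p q i.-1 j.-1 a.-1 ltac:(lia) ltac:(lia) E'.
  by rewrite ep; congr (inl (_, _)); apply: ord_inj; lia.
- nia.
- nia.
- have E' : p * b.-1 + i.-1 = q * b.-1 + j.-1 by nia.
  have [/ord_inj ep ei] := @mixed p q i.-1 j.-1 b.-1 ltac:(lia) ltac:(lia) E'.
  by rewrite ep; congr (inr (_, _)); apply: ord_inj; lia.
Qed.

Lemma vert_at x i : i <= len x -> exists y, comp y = comp x /\ idx y = i.
Proof.
case: x => [[p j]|[p j]] /= hi.
  by exists (inl (p, inord i)); rewrite /= inordK.
by exists (inr (p, inord i)); rewrite /= inordK.
Qed.

Lemma decode_vert t : t < P -> exists y, idx y != 0 /\ tix y = t.
Proof.
rewrite /P => ht; have a0 : 0 < a by lia.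
have b0 : 0 < b by lia.
case: (ltnP t (s * a)) => h.
  have hp : t %/ a < s by rewrite ltn_divLR.
  have hr : t %% a < a by apply: ltn_pmod.
  exists (inl (Ordinal hp, inord (t %% a).+1)); rewrite /tix /= inordK; last by lia.
  by split => //; have := divn_eq t a; lia.
have hp : (t - s * a) %/ b < k by rewrite ltn_divLR //; lia.
have hr : (t - s * a) %% b < b by apply: ltn_pmod.
exists (inr (Ordinal hp, inord ((t - s * a) %% b).+1)); rewrite /tix /= inordK; last by lia.
by split => //; have := divn_eq (t - s * a) b; lia.
Qed.

Lemma decode_low u : u + Q < P -> exists x, [/\ idx x != 0, idx x < len x & tix x = u + comp x].
Proof.
rewrite /P /Q => hu; have a0 : 0 < a.-1 by lia.
have b0 : 0 < b.-1 by lia.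
case: (ltnP u (s * a.-1)) => h.
  have hp : u %/ a.-1 < s by rewrite ltn_divLR.
  have hr : u %% a.-1 < a.-1 by apply: ltn_pmod.
  exists (inl (Ordinal hp, inord (u %% a.-1).+1)); rewrite /tix /= inordK; last by lia.
  split => //; first by lia.
  have := divn_eq u a.-1; move: (u %/ a.-1) (u %% a.-1) hp hr => pp rr; nia.
have hp : (u - s * a.-1) %/ b.-1 < k by rewrite ltn_divLR //; nia.
have hr : (u - s * a.-1) %% b.-1 < b.-1 by apply: ltn_pmod.
exists (inr (Ordinal hp, inord ((u - s * a.-1) %% b.-1).+1)); rewrite /tix /= inordK; last by lia.
split => //; first by lia.
have := divn_eq (u - s * a.-1) b.-1; move: ((u - s * a.-1) %/ b.-1) ((u - s * a.-1) %% b.-1) hp hr => pp rr; nia.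
Qed.


Lemma adj_cases x y : adj x y -> comp x = comp y /\
  ((idx x = 0 /\ idx y != 0) \/ (idx y = 0 /\ idx x != 0) \/
   (idx x != 0 /\ idx y = (idx x).+1) \/ (idx y != 0 /\ idx x = (idx y).+1)).
Proof. rewrite adjE /frel => /andP [/eqP -> H]; split => //; lia. Qed.

Lemma tix_succ u v : idx u != 0 -> comp v = comp u -> idx v = (idx u).+1 -> tix v = (tix u).+1.
Proof. move=> hu /comp_eq [ho _] hv; rewrite /tix ho hv; lia. Qed.

Lemma g_spoke c v : idx c = 0 -> idx v != 0 -> gl c v = 3 * P - tix v /\ gl v c = 3 * P - tix v.
Proof. by move=> hc hv; rewrite /gl hc eqxx (negbTE hv). Qed.

Lemma g_path u v : idx u != 0 -> comp v = comp u -> idx v = (idx u).+1 ->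
  gl u v = P + Q + 1 + tix u - comp u /\ gl v u = P + Q + 1 + tix u - comp u.
Proof.
move=> hu hc hv; have ht := tix_succ hu hc hv.
have hv0 : idx v != 0 by rewrite hv.
rewrite /gl (negbTE hu) (negbTE hv0) ht hc; split; congr (_ - _); lia.
Qed.

Lemma hh_sum t : hh t + hh t.+1 = X + t + 1.
Proof. rewrite /hh /=; case: (odd t) => /=; lia. Qed.

Lemma hh_range t : t < P -> 0 < hh t <= P.
Proof. rewrite /hh /X; case: ifP; lia. Qed.

Lemma hh_inj t t' : t < P -> t' < P -> hh t = hh t' -> t = t'.
Proof. rewrite /hh /X; case: ifP; case: ifP; lia. Qed.

Lemma gl_sym x y : gl x y = gl y x.
Proof.
rewrite /gl; case: (idx x == 0); case: (idx y == 0) => //.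
by rewrite minnC (minnC (comp x)).
Qed.

Lemma magic_key c u v : idx c = 0 -> idx u != 0 -> comp u = comp c -> comp v = comp c ->
  idx v = (idx u).+1 ->
  fl c + fl u + fl v + gl c u + gl u v + gl c v = 8 * P + Q + X + 2.
Proof.
move=> hc hu cu cv hv.
have hv0 : idx v != 0 by rewrite hv.
have cvu : comp v = comp u by rewrite cu.
have ht := tix_succ hu cvu hv.
have [g1 _] := g_spoke hc hu; have [g2 _] := g_spoke hc hv0; have [g3 _] := g_path hu cvu hv.
have [b1 b2] := tix_bounds hu; have [b3 b4] := tix_bounds hv0.
have hs := hh_sum (tix u).
rewrite g1 g2 g3 /fl hc eqxx (negbTE hu) (negbTE hv0) ht.
rewrite cu in b1; lia.
Qed.


Lemma len_ge2 x : 2 <= len x.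
Proof. by case: x => [[p i]|[p i]]. Qed.

Lemma set2C (x y : V) : [set x; y] = [set y; x].
Proof. by rewrite setUC. Qed.

Lemma adj_nf x y : adj x y ->
  (exists c v, [/\ [set x; y] = [set c; v], idx c = 0, idx v != 0, comp v = comp c & gl x y = 3 * P - tix v]) \/
  (exists u v, [/\ [set x; y] = [set u; v], idx u != 0, idx u < len u, comp v = comp u &
     idx v = (idx u).+1 /\ gl x y = P + Q + 1 + tix u - comp u]).
Proof.
move=> /adj_cases [hc [[h1 h2]|[[h1 h2]|[[h1 h2]|[h1 h2]]]]].
- left; exists x, y; split => //; by have [] := g_spoke h1 h2.
- left; exists y, x; split => //; [exact: set2C | by have [] := g_spoke h1 h2].
- right; exists x, y; split => //.
    by have [_ ->] := comp_eq hc; have := idx_le y; lia.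
  by split => //; have [] := g_path h1 (esym hc) h2.
- right; exists y, x; split => //.
  + exact: set2C.
  + by have [_ <-] := comp_eq hc; have := idx_le x; lia.
  + by split => //; have [] := g_path h1 hc h2.
Qed.

Lemma adj_mk x y : comp x = comp y -> frel (idx x) (idx y) -> adj x y.
Proof. by move=> h f; rewrite adjE h eqxx. Qed.

Lemma cov_spoke c v : idx c = 0 -> idx v != 0 -> comp v = comp c -> exists w, adj c w /\ adj v w.
Proof.
move=> hc hv cv.
case: (ltnP (idx v) (len v)) => h.
  have [w [cw iw]] := vert_at (i := (idx v).+1) h.
  by exists w; split; apply: adj_mk; rewrite ?cw ?cv ?iw ?hc /frel //; lia.
have := len_ge2 v; have := idx_le v => h1 h2.
have [w [cw iw]] := @vert_at v (idx v).-1 ltac:(lia).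
by exists w; split; apply: adj_mk; rewrite ?cw ?cv ?iw ?hc /frel //; lia.
Qed.

Lemma H1 : symmetric adj.
Proof.
have hQP := QP.
by move=> x y; apply/idP/idP; rewrite !adjE /frel; lia.
Qed.

Lemma H2 : irreflexive adj.
Proof.
have hQP := QP.
by move=> x; rewrite adjE /frel; lia.
Qed.

Lemma H3 : forall x y, gl x y = gl y x.
Proof.
have hQP := QP.
exact: gl_sym.
Qed.

Lemma H4 : injective fl.
Proof.
have hQP := QP.
move=> x y; rewrite /fl; case: eqP => hx; case: eqP => hy.
+ move=> E; apply: vert_eq; lia.
+ have /tix_bounds [_ bd] : idx y != 0 by apply/eqP.
  by have := hh_range bd; lia.
+ have /tix_bounds [_ bd] : idx x != 0 by apply/eqP.
  by have := hh_range bd; lia.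
+ have hx' : idx x != 0 by apply/eqP.
  have hy' : idx y != 0 by apply/eqP.
  have [_ b1] := tix_bounds hx'; have [_ b2] := tix_bounds hy'.
  by move/(hh_inj b1 b2)/(tix_inj hx' hy').
Qed.

Lemma H5 : forall x, 0 < fl x <= #|{: V}|.
Proof.
have hQP := QP.
move=> x; rewrite cardV /fl; case: eqP => hx.
  by have := comp_lt x; lia.
have hx' : idx x != 0 by apply/eqP.
have [_ bd] := tix_bounds hx'; have := hh_range bd; lia.
Qed.

Lemma H6 : forall x y, adj x y -> #|{: V}| < gl x y <= #|{: V}| + (2 * P - Q).
Proof.
have hQP := QP.
move=> x y /adj_nf [[c [v [_ hc hv cv ->]]]|[u [v [_ hu hl cv [iv ->]]]]]; rewrite cardV.
  by have [_ bd] := tix_bounds hv; lia.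
by have [bd _] := tix_bounds hu; have := code_lt hu hl; lia.
Qed.

Lemma H7 : forall x y x' y', adj x y -> adj x' y' -> gl x y = gl x' y' -> [set x; y] = [set x'; y'].
Proof.
have hQP := QP.
move=> x y x' y' /adj_nf H /adj_nf H'.
case: H => [[c [v [-> hc hv cv ->]]]|[u [v [-> hu hl cv [iv ->]]]]];
case: H' => [[c' [v' [-> hc' hv' cv' ->]]]|[u' [v' [-> hu' hl' cv' [iv' ->]]]]] E.
+ have [_ bd] := tix_bounds hv; have [_ bd'] := tix_bounds hv'.
  have ev : v = v' by apply: tix_inj => //; lia.
  subst v'; have ec : c = c' by apply: vert_eq; lia.
  by rewrite ec.
+ have [_ bd] := tix_bounds hv; have [b1 _] := tix_bounds hu'; have := code_lt hu' hl'; lia.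
+ have [_ bd] := tix_bounds hv'; have [b1 _] := tix_bounds hu; have := code_lt hu hl; lia.
+ have [b1 _] := tix_bounds hu; have [b2 _] := tix_bounds hu'.
  have := code_lt hu hl; have := code_lt hu' hl' => c1 c2.
  have eu : u = u' by apply: code_inj => //; lia.
  subst u'; have ev : v = v' by apply: vert_eq; lia.
  by rewrite ev.
Qed.

Lemma H8 : forall m, #|{: V}| < m <= #|{: V}| + (2 * P - Q) -> exists x y, adj x y /\ gl x y = m.
Proof.
have hQP := QP.
move=> m; rewrite cardV => hm.
case: (ltnP (2 * P) m) => h.
  have [v [hv tv]] := @decode_vert (3 * P - m) ltac:(lia).
  have [c [cc ic]] := @vert_at v 0 ltac:(lia).
  exists c, v; split.
    by apply: adj_mk; rewrite ?cc ?ic /frel //; lia.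
  by have [-> _] := g_spoke ic hv; lia.
have [u [hu hl tu]] := @decode_low (m - (P + Q + 1)) ltac:(lia).
have [v [cv iv]] := @vert_at u (idx u).+1 hl.
exists u, v; split.
  by apply: adj_mk; rewrite ?cv ?iv /frel //; lia.
by have [-> _] := g_path hu cv iv; have [b1 _] := tix_bounds hu; lia.
Qed.

Lemma H9 : forall x y, adj x y -> exists z, adj x z && adj y z.
Proof.
have hQP := QP.
move=> x y /adj_cases [hc [[h1 h2]|[[h1 h2]|[[h1 h2]|[h1 h2]]]]].
+ by have [w [a1 a2]] := cov_spoke h1 h2 (esym hc); exists w; rewrite a1 a2.
+ by have [w [a1 a2]] := cov_spoke h1 h2 hc; exists w; rewrite a1 a2.
+ have [w [cw iw]] := @vert_at x 0 ltac:(lia).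
  by exists w; apply/andP; split; apply: adj_mk; rewrite ?cw ?iw /frel -?hc //; lia.
+ have [w [cw iw]] := @vert_at x 0 ltac:(lia).
  by exists w; apply/andP; split; apply: adj_mk; rewrite ?cw ?iw /frel -?hc //; lia.
Qed.

Lemma frelP i j : frel i j -> (i = 0 /\ 0 < j) \/ (j = 0 /\ 0 < i) \/ (0 < i /\ j = i.+1) \/ (0 < j /\ i = j.+1).
Proof.
rewrite /frel => /orP [/andP [/eqP A B]|/orP [/andP [/eqP A B]|/orP [/andP [A /eqP B]|/andP [A /eqP B]]]].
- by left; split => //; lia.
- by right; left; split => //; lia.
- by right; right; left; split => //; lia.
- by right; right; right; split => //; lia.
Qed.

Lemma tri_idx i j l : frel i j -> frel j l -> frel i l ->
  (i = 0 /\ l = j.+1 /\ 0 < j) \/ (i = 0 /\ j = l.+1 /\ 0 < l) \/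
  (j = 0 /\ l = i.+1 /\ 0 < i) \/ (j = 0 /\ i = l.+1 /\ 0 < l) \/
  (l = 0 /\ j = i.+1 /\ 0 < i) \/ (l = 0 /\ i = j.+1 /\ 0 < j).
Proof.
move=> /frelP H1 /frelP H2 /frelP H3.
case: H1 => [[A1 A2]|[[A1 A2]|[[A1 A2]|[A1 A2]]]];
case: H2 => [[B1 B2]|[[B1 B2]|[[B1 B2]|[B1 B2]]]];
case: H3 => [[C1 C2]|[[C1 C2]|[[C1 C2]|[C1 C2]]]];
  solve [ exfalso; lia | left; lia | right; left; lia | right; right; left; lia
        | right; right; right; left; lia | right; right; right; right; left; lia
        | right; right; right; right; right; lia ].
Qed.

Lemma H10 : forall x y z, adj x y -> adj y z -> adj x z -> fl x + fl y + fl z + gl x y + gl y z + gl x z = 8 * P + Q + X + 2.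
Proof.
move=> x y z; rewrite !adjE => /andP [/eqP c1 f1] /andP [/eqP c2 f2] /andP [/eqP c3 f3].
have S1 := gl_sym x y; have S2 := gl_sym y z; have S3 := gl_sym x z.
have D := tri_idx f1 f2 f3; clear f1 f2 f3.
have cyx : comp y = comp x by [].
have czx : comp z = comp x by rewrite -c3.
have cxy : comp x = comp y by [].
have czy : comp z = comp y by rewrite -c2.
have cxz : comp x = comp z by [].
have cyz : comp y = comp z by [].
case: D => [[h1 [h2 h3]]|[[h1 [h2 h3]]|[[h1 [h2 h3]]|[[h1 [h2 h3]]|[[h1 [h2 h3]]|[h1 [h2 h3]]]]]]];
  have h3' := h3; rewrite lt0n in h3'.
- exact: (@magic_key x y z h1 h3' cyx czx h2).
- have := @magic_key x z y h1 h3' czx cyx h2; lia.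
- have := @magic_key y x z h1 h3' cxy czy h2; lia.
- have := @magic_key y z x h1 h3' czy cxy h2; lia.
- have := @magic_key z x y h1 h3' cxz cyz h2; lia.
- have := @magic_key z y x h1 h3' cyz cxz h2; lia.
Qed.

Theorem fan_main : C3_supermagic adj.
Proof.
exact: (@abstract_main _ adj fl gl (8 * P + Q + X + 2) (2 * P - Q) H1 H2 H3 H4 H5 H6 H7 H8 H9 H10).
Qed.

End Concrete.

Unset Implicit Arguments.

Theorem theorem9 (s k n : nat) (hs : 0 < s) (hk : 0 < k) (hn : 3 <= n) :
  @C3_supermagic _ (@fan_union_adj s k n.+1 n).
Proof.
apply: (@fan_main s k n.+1 n); lia.
Qed.
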